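(* Let $n$ be a positive integer and let $G=G_<$ be an ordered graph on vertex set $S\cup T$, where $S<T$, $|S|\ge \frac{n}{6\log_2 n}$ and $|T|\ge n$. Then either there exists a vertex $v\in S$ such that $|P(v,T)|\ge \frac{n}{12}$, or the complement of $G$ contains a bi-clique of size $\frac{n}{12\log_2 n}$.
   Context: An ordered graph $G_<$ is a graph with a total ordering $<$ of its vertex set. For vertex sets $S,T$, $S<T$ means $s<t$ for all $s\in S$, $t\in T$. For a vertex $v$ and a set $T$ of vertices, a vertex $t\in T$ is reached from $v$ by a monotone $T$-path if there is a sequence $v<t_1<t_2<\dots<t_r=t$ with $r\ge1$, $t_1,\dots,t_r\in T$, and $vt_1,t_1t_2,\dots,t_{r-1}t_r\in E(G)$ ($v$ need not be in $T$). $P(v,T)$ denotes the set of vertices of $T$ that can be reached from $v$ by a monotone $T$-path. A bi-clique is a pair $(A,B)$ of disjoint vertex sets with $|A|=|B|$ and every vertex of $A$ adjacent to every vertex of $B$; its size is $|A|$. (Floors and ceilings are ignored, as in the paper.) *)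

(* Defs.v *)
From mathcomp Require Import all_boot.
From Stdlib Require Import Reals.
Set Implicit Arguments.
Unset Strict Implicit.
Unset Printing Implicit Defensive.

(* An ordered graph on N vertices: vertices are 'I_N ordered by the natural
   order; adjacency is a symmetric irreflexive relation E. *)
Definition simple_graph (N : nat) (E : rel 'I_N) : Prop :=
  irreflexive E /\ symmetric E.

Definition set_lt (N : nat) (S T : {set 'I_N}) : Prop :=
  forall s t, s \in S -> t \in T -> (s < t)%N.

Definition mstep (N : nat) (E : rel 'I_N) (T : {set 'I_N}) : rel 'I_N :=
  fun x y => [&& (x < y)%N, E x y & y \in T].

(* P(v,T): vertices of T reachable from v by a monotone T-path with r >= 1
   steps: a first step v -> u, then any number of further steps to t. *)
Definition Preach (N : nat) (E : rel 'I_N) (v : 'I_N) (T : {set 'I_N})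
  : {set 'I_N} :=
  [set t in T | [exists u, mstep E T v u && connect (mstep E T) u t]].

Definition co_biclique (N : nat) (E : rel 'I_N) (A B : {set 'I_N}) (k : nat)
  : Prop :=
  [disjoint A & B] /\ #|A| = k /\ #|B| = k /\
  (forall a b, a \in A -> b \in B -> a != b /\ ~~ E a b).

Definition log2 (x : R) : R := (ln x / ln 2)%R.

(* Main.v *)
Require Import Defs.
From mathcomp Require Import all_boot.
From Stdlib Require Import Reals.
From mathcomp Require Import zify.
From Stdlib Require Import Classical Lra.

Lemma subset_card (T : finType) (A : {set T}) m :
  (m <= #|A|)%N -> exists2 B : {set T}, B \subset A & #|B| = m.
Proof.
move=> h; have [d hd] : exists d, #|A| = (m + d)%N by exists (#|A| - m)%N; lia.
elim: d A hd {h} => [|d IH] A hd.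
  by exists A => //; rewrite hd addn0.
have : (0 < #|A|)%N by rewrite hd; lia.
case/card_gt0P => x xA.
have := IH (A :\ x); rewrite (cardsD1 x A) xA in hd.
case=> [|B BA hB]; first by lia.
exists B => //; apply: subset_trans BA _; exact: subsetDl.
Qed.

Arguments subset_card {T A m}.

Section Comb.
Variables (N : nat) (E : rel 'I_N).

Definition cl (I X : {set 'I_N}) : {set 'I_N} :=
  [set y | [exists x in X, connect (mstep E I) x y]].

Lemma conn_ge (I : {set 'I_N}) x y : connect (mstep E I) x y -> x = y \/ (x < y)%N /\ y \in I.
Proof.
move/connectP=> [p]; elim: p x => [|z p IH] x /=.
  by move=> _ ->; left.
case/andP => /and3P[h1 h2 h3] hp hy.
case: (IH z hp hy) => [<-|[h4 h5]]; right; split => //; exact: ltn_trans h4.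
Qed.

Lemma conn_mono (I J : {set 'I_N}) x y : I \subset J ->
  connect (mstep E I) x y -> connect (mstep E J) x y.
Proof.
move=> IJ; apply: connect_sub => a b /and3P[h1 h2 h3]; apply: connect1.
by rewrite /mstep h1 h2 (subsetP IJ _ h3).
Qed.

Lemma cl_closed (I X : {set 'I_N}) y z : y \in cl I X -> z \in I -> (y < z)%N -> E y z ->
  z \in cl I X.
Proof.
rewrite !inE => /exists_inP[x xX hxy] zI yz Eyz; apply/exists_inP; exists x => //.
apply: connect_trans hxy (connect1 _); by rewrite /mstep yz Eyz zI.
Qed.

Lemma cl_sub (I X : {set 'I_N}) : X \subset cl I X.
Proof. by apply/subsetP=> x xX; rewrite inE; apply/exists_inP; exists x. Qed.

Lemma cl_in (I X : {set 'I_N}) y : y \in cl I X -> y \in X \/ y \in I.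
Proof.
rewrite inE => /exists_inP[x xX /conn_ge[<-|[_ ->]]]; by [left|right].
Qed.

Lemma cl_mono (I J X : {set 'I_N}) : I \subset J -> cl I X \subset cl J X.
Proof.
move=> IJ; apply/subsetP=> y; rewrite !inE => /exists_inP[x xX h].
by apply/exists_inP; exists x => //; apply: conn_mono h.
Qed.

Lemma clU (I X Y : {set 'I_N}) : cl I (X :|: Y) \subset cl I X :|: cl I Y.
Proof.
apply/subsetP=> y; rewrite !inE => /exists_inP[x]; rewrite inE => /orP[xX|xY] h.
  by apply/orP; left; apply/exists_inP; exists x.
by apply/orP; right; apply/exists_inP; exists x.
Qed.

Lemma clS (I X Y : {set 'I_N}) : X \subset Y -> cl I X \subset cl I Y.
Proof.
move=> XY; apply/subsetP=> y; rewrite !inE => /exists_inP[x xX h].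
by apply/exists_inP; exists x => //; apply: (subsetP XY).
Qed.

Lemma cl0 (I : {set 'I_N}) : cl I set0 = set0.
Proof. by apply/setP=> y; rewrite !inE; apply/exists_inP => -[x]; rewrite inE. Qed.

Arguments cl_in {I X y}.
Arguments cl_closed {I X y z}.

Variable k : nat.
Hypothesis NB : forall A B, ~ co_biclique E A B k.

Lemma nobic (A B : {set 'I_N}) : [disjoint A & B] -> (k <= #|A|)%N -> (k <= #|B|)%N ->
  (forall a b, a \in A -> b \in B -> ~~ E a b) -> False.
Proof.
move=> dAB hA hB hE.
have [A' A'A hA'] := subset_card hA; have [B' B'B hB'] := subset_card hB.
apply: (NB A' B'); split; first exact: disjointW dAB.
split=> //; split=> // a b aA bB; split; last by apply: hE; [apply: (subsetP A'A)|apply: (subsetP B'B)].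
apply/eqP=> ab; subst b.
by move: dAB; rewrite disjoint_subset => /subsetP/(_ a (subsetP A'A _ aA)); rewrite inE (subsetP B'B _ bB).
Qed.

Definition pre (I : {set 'I_N}) c := [set x in I | (x < c)%N].
Definition post (I : {set 'I_N}) c := [set x in I | (c <= x)%N].

Lemma card_pre_post (I : {set 'I_N}) c : #|pre I c| + #|post I c| = #|I|.
Proof.
rewrite -(cardsID [set x : 'I_N | (x < c)%N] I); congr (_ + _); apply: eq_card => x;
rewrite !inE andbC //; by case: (ltnP x c).
Qed.

Lemma step (I : {set 'I_N}) c (X : {set 'I_N}) : X \subset pre I c -> (k <= #|cl (pre I c) X|)%N ->
  (#|post I c| < #|cl I X| + k)%N.
Proof.
move=> XI hk.
have preI : pre I c \subset I by apply/subsetP=> x; rewrite inE => /andP[].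
rewrite ltnNge; apply/negP => hle.
have hB : (k <= #|post I c :\: cl I X|)%N.
  have := cardsID (cl I X) (post I c).
  have : (#|post I c :&: cl I X| <= #|cl I X|)%N by apply: subset_leq_card; apply: subsetIr.
  lia.
apply: (@nobic (cl (pre I c) X) (post I c :\: cl I X)) => //.
- rewrite disjoint_subset; apply/subsetP => a aA; rewrite !inE.
  have : (a < c)%N.
    case: (cl_in aA) => [aX|]; last by rewrite inE => /andP[].
    by move: (subsetP XI _ aX); rewrite inE => /andP[].
  by move=> ac; apply/negP => /andP[_ /andP[_ /(leq_trans ac)]]; rewrite ltnn.
- move=> a b aA; rewrite !inE => /andP[bnc /andP[bI cb]]; apply/negP => Eab.
  have ac : (a < c)%N.
    case: (cl_in aA) => [aX|]; last by rewrite inE => /andP[].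
    by move: (subsetP XI _ aX); rewrite inE => /andP[].
  have := cl_closed (subsetP (cl_mono _ _ X preI) _ aA) bI (leq_trans ac cb) Eab.
  by rewrite inE (negbTE bnc).
Qed.

Arguments step {I c X}.

Lemma pre_step (I : {set 'I_N}) c : (#|pre I c.+1| <= #|pre I c| + 1)%N.
Proof.
have : pre I c.+1 \subset pre I c :|: [set x : 'I_N | nat_of_ord x == c].
  apply/subsetP=> x; rewrite !inE ltnS leq_eqVlt => /andP[-> /orP[->|->]] //.
  by rewrite orbT.
move/subset_leq_card/leq_trans; apply; apply: leq_trans (leq_card_setU _ _) _.
rewrite leq_add2l; apply/card_le1_eqP => x y; rewrite !inE => /eqP hx /eqP hy.
by apply: val_inj; rewrite /= hx hy.
Qed.

Lemma ivt (I : {set 'I_N}) m : (m <= #|I|)%N -> exists c, #|pre I c| = m.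
Proof.
have hN : #|pre I N| = #|I|.
  by apply: eq_card => x; rewrite inE ltn_ord andbT.
suff : forall c, (m <= #|pre I c|)%N -> exists c, #|pre I c| = m.
  by move=> H hm; apply: (H N); rewrite hN.
elim=> [|c IH].
  have h0 : pre I 0 = set0 by apply/setP=> x; rewrite !inE ltn0 andbF.
  by rewrite h0 cards0 leqn0 => /eqP ->; exists 0; rewrite h0 cards0.
move=> hm; case: (leqP m #|pre I c|) => h; first exact: IH.
exists c.+1; have := pre_step I c; lia.
Qed.

Definition Inv (I : {set 'I_N}) r := forall X : {set 'I_N}, X \subset I -> (#|X| <= r)%N -> (#|cl I X| < k)%N.

Lemma split2 (X : {set 'I_N}) r : (#|X| <= r + r)%N ->
  exists X1 X2, [/\ X = X1 :|: X2, X1 \subset X, X2 \subset X, (#|X1| <= r)%N & (#|X2| <= r)%N].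
Proof.
move=> h.
have [X1 X1X h1] := subset_card (geq_minr r #|X|).
exists X1, (X :\: X1); split => //.
- by apply/setP=> x; rewrite !inE; case: (boolP (x \in X1)) => //= /(subsetP X1X) ->.
- exact: subsetDl.
- by rewrite h1 geq_minl.
- have := cardsD X X1; rewrite (setIidPr X1X) h1 => ->; lia.
Qed.

Arguments split2 {X r}.

Lemma core s : forall (I : {set 'I_N}) r, Inv I r -> (k <= r * expn 2 s)%N ->
  (k + 3 * k * s <= #|I|)%N -> False.
Proof.
elim: s => [|s IH] I r hI hr hs.
  rewrite muln0 addn0 in hs; rewrite expn0 muln1 in hr.
  have [X XI hX] := subset_card hs.
  have := hI X XI; rewrite hX => /(_ hr).
  by have := subset_leq_card (cl_sub I X); rewrite hX; lia.
have [c hc] : exists c, #|pre I c| = (#|I| - 3 * k)%N by apply: ivt; lia.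
have hpost : #|post I c| = (3 * k)%N.
  have := card_pre_post I c; have : (3 * k <= #|I|)%N by nia. lia.
apply: (IH (pre I c) (r + r)).
- move=> X XI hX.
  rewrite ltnNge; apply/negP => hk.
  have hst := step XI hk; rewrite hpost in hst.
  have [X1 [X2 [eX X1X X2X h1 h2]]] := split2 hX.
  have preI : pre I c \subset I by apply/subsetP=> x; rewrite inE => /andP[].
  have sX : X \subset I by apply: subset_trans XI preI.
  have c1 := hI X1 (subset_trans X1X sX) h1.
  have c2 := hI X2 (subset_trans X2X sX) h2.
  have u1 := subset_leq_card (clU I X1 X2); rewrite -eX in u1.
  have u2 := (leq_card_setU (cl I X1) (cl I X2)).1.
  lia.
- rewrite expnS in hr; move: hr; set z := expn 2 s; nia.
- by rewrite hc; nia.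
Qed.

Lemma base (W : {set 'I_N}) (Hc s : nat) :
  (forall X : {set 'I_N}, X \subset W -> (#|X| <= 1)%N -> (#|cl W X| <= Hc)%N) ->
  (0 < k)%N -> (k <= expn 2 s)%N -> (Hc + 2 * k + 3 * k * s <= #|W|)%N -> False.
Proof.
move=> hW k0 hs hsz.
have [c hc] : exists c, #|pre W c| = (#|W| - (Hc + k))%N by apply: ivt; lia.
have hpost : #|post W c| = (Hc + k)%N by have := card_pre_post W c; lia.
apply: (@core s (pre W c) 1).
- move=> X XI hX; rewrite ltnNge; apply/negP => hk.
  have := step XI hk; rewrite hpost.
  have preI : pre W c \subset W by apply/subsetP=> x; rewrite inE => /andP[].
  have := hW X (subset_trans XI preI) hX; lia.
- by rewrite mul1n.
- by rewrite hc; lia.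
Qed.

End Comb.
Theorem comb N (E : rel 'I_N) (S T : {set 'I_N}) (n k s Hc : nat) :
  set_lt S T -> (0 < k)%N -> (k <= #|S|)%N -> (k <= expn 2 s)%N -> (n <= #|T|)%N ->
  (forall v, v \in S -> (#|Preach E v T| <= Hc)%N) ->
  (Hc + 3 * k + 3 * k * s <= n + 1)%N ->
  exists A B, co_biclique E A B k.
Proof.
move=> hlt k0 hkS hks hnT hP hineq.
apply: NNPP => hno.
have NB : forall A B, ~ co_biclique E A B k by move=> A B h; apply: hno; exists A, B.
have [Y YS hY] := subset_card hkS.
set W := [set t in T | [exists y in Y, t \in Preach E y T]].
have WT : W \subset T by apply/subsetP => t; rewrite inE => /andP[].
have hW : (#|T| < #|W| + k)%N.
  rewrite ltnNge; apply/negP => hle.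
  have hB : (k <= #|T :\: W|)%N.
    have := cardsID W T.
    have : (#|T :&: W| <= #|W|)%N by apply: subset_leq_card; apply: subsetIr.
    lia.
  apply: (@nobic N E k NB Y (T :\: W)) => //.
  - rewrite disjoint_subset; apply/subsetP => y yY; rewrite !inE negb_and.
    apply/orP; right; apply/negP => yT.
    by have := hlt y y (subsetP YS y yY) yT; rewrite ltnn.
  - by rewrite hY.
  - move=> y b yY; rewrite !inE => /andP[bnW bT]; apply/negP => Eyb.
    have yb := hlt y b (subsetP YS y yY) bT.
    move/negP: bnW; apply; rewrite bT /=; apply/exists_inP; exists y => //.
    rewrite inE bT /=; apply/existsP; exists b; by rewrite /mstep yb Eyb bT connect0.
apply: (@base N E k NB W Hc s) => //; last by nia.
move=> X XW hX.
case: (set_0Vmem X) => [->|[w wX]]; first by rewrite cl0 cards0.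
have Xw : forall x, x \in X -> x = w.
  by move=> x xX; move/card_le1_eqP: hX => /(_ x w xX wX).
have := subsetP XW w wX; rewrite inE => /andP[wT /exists_inP[y yY wP]].
apply: leq_trans (hP y (subsetP YS y yY)).
apply: subset_leq_card; apply/subsetP => z; rewrite inE => /exists_inP[x xX hxz].
rewrite (Xw x xX) in hxz.
have hz : connect (mstep E T) w z by apply: conn_mono hxz.
have zT : z \in T.
  case: (@conn_ge N E W w z hxz) => [<-|[_ zW]] //; exact: (subsetP WT).
move: wP; rewrite !inE zT wT /= => /existsP[u /andP[yu uw]].
apply/existsP; exists u; rewrite yu /=; exact: connect_trans uw hz.
Qed.

Lemma ln_le' (x y : R) : (0 < x)%R -> (x <= y)%R -> (ln x <= ln y)%R.
Proof.
move=> hx hxy; case: (Rle_lt_or_eq_dec _ _ hxy) => h.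
  by apply: Rlt_le; apply: ln_increasing.
by rewrite h; apply: Rle_refl.
Qed.

Lemma INR_expn2 m : INR (expn 2 m) = (2 ^ m)%R.
Proof.
elim: m => [|m IH]; first by rewrite expn0.
by rewrite expnS -multE mult_INR IH /=.
Qed.

Lemma ln2_pos : (0 < ln 2)%R.
Proof. have := ln_lt_2; lra. Qed.

Lemma log2_bounds (n m : nat) : (expn 2 m <= n)%N -> (n <= expn 2 m.+1)%N ->
  (INR m <= log2 (INR n) <= INR m + 1)%R.
Proof.
move=> h1 h2.
have l2 := ln2_pos.
have e0 : forall j, (0 < INR (expn 2 j))%R.
  by move=> j; apply: lt_0_INR; apply/ltP; rewrite expn_gt0.
have key : forall j, ln (INR (expn 2 j)) = (INR j * ln 2)%R.
  by move=> j; rewrite INR_expn2 ln_pow //; lra.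
have a1 : (INR m * ln 2 <= ln (INR n))%R.
  rewrite -key; apply: ln_le' => //; apply: le_INR; exact/leP.
have a2 : (ln (INR n) <= (INR m + 1) * ln 2)%R.
  have -> : (INR m + 1)%R = INR m.+1 by rewrite S_INR.
  rewrite -key; apply: ln_le'; last by apply: le_INR; exact/leP.
  apply: lt_0_INR; apply/ltP; apply: leq_trans h1; rewrite expn_gt0.
  done.
rewrite /log2; split.
  apply: (Rmult_le_reg_r (ln 2)) => //; rewrite /Rdiv Rmult_assoc Rinv_l; lra.
apply: (Rmult_le_reg_r (ln 2)) => //; rewrite /Rdiv Rmult_assoc Rinv_l; lra.
Qed.

Lemma small_m m : (1 <= m <= 4)%N -> (expn 2 m.+1 <= 8 * m)%N.
Proof. by case: m => [|[|[|[|[|m]]]]]. Qed.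

Lemma arith (n m q Hc s : nat) : (2 <= n)%N -> (1 <= m)%N ->
  (expn 2 m <= n)%N -> (n < expn 2 m.+1)%N ->
  (q * (12 * m) <= n - 1)%N -> (n - 1 < q.+1 * (12 * m))%N ->
  (Hc * 12 <= n - 1)%N ->
  s = (if q == 0 then 0 else m.+1) ->
  (Hc + 3 * q.+1 + 3 * q.+1 * s <= n + 1)%N.
Proof.
move=> n2 m1 e1 e2 d1 d2 h12 ->.
case: eqP => [q0|/eqP q0]; first by subst q; lia.
have [m6|m5] := leqP 6 m.
  nia.
have [m4|m5'] := leqP m 4.
  have := small_m m; rewrite m1 m4 => /(_ isT) => hs.
  nia.
have m5e : m = 5 by lia.
subst m; have : expn 2 6 = 64 by []. lia.
Qed.

Lemma div_le (a b c : R) : (0 < c)%R -> (a <= b * c)%R -> (a / c <= b)%R.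
Proof.
move=> hc h; apply: (Rmult_le_reg_r c) => //.
rewrite /Rdiv Rmult_assoc Rinv_l; lra.
Qed.

Lemma le_div (a b c : R) : (0 < c)%R -> (a / c <= b)%R -> (a <= b * c)%R.
Proof.
move=> hc h; have := Rmult_le_compat_r c _ _ (Rlt_le _ _ hc) h.
rewrite /Rdiv Rmult_assoc Rinv_l; lra.
Qed.

Theorem lemma6 (n N : nat) (E : rel 'I_N) (S T : {set 'I_N}) :
  (0 < n)%N ->
  simple_graph E ->
  S :|: T = [set: 'I_N] ->
  set_lt S T ->
  (INR #|S| >= INR n / (6 * log2 (INR n)))%R ->
  (#|T| >= n)%N ->
  (exists v, v \in S /\ (INR #|Preach E v T| >= INR n / 12)%R) \/
  (exists (A B : {set 'I_N}) (k : nat),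
      co_biclique E A B k /\ (INR k >= INR n / (12 * log2 (INR n)))%R).
Proof.
move=> hn _ _ hlt hS hT.
case: (eqVneq n 1) => [n1|n1].
  subst n; right; exists set0, set0, 0; split.
    split; first by rewrite -setI_eq0 setI0.
    by rewrite cards0; split=> //; split=> // a b; rewrite inE.
  rewrite /log2 ln_1 /Rdiv Rmult_0_l Rmult_0_r Rinv_0 Rmult_0_r /=; lra.
have n2 : (2 <= n)%N by lia.
set m := trunc_log 2 n.
have [e1 e2] : (expn 2 m <= n < expn 2 m.+1)%N /\ True.
  by split=> //; apply: trunc_log_bounds.
move/andP: e1 => [e1 e2'].
have m1 : (1 <= m)%N by rewrite /m trunc_log_gt0.
have [hL1 hL2] := @log2_bounds n m e1 (ltnW e2').
set L := log2 (INR n) in hS hL1 hL2 *.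
have Lpos : (0 < L)%R.
  have : (1 <= INR m)%R by have := le_INR 1 m (elimT leP m1).
  lra.
set q := ((n - 1) %/ (12 * m))%N.
have d1 : (q * (12 * m) <= n - 1)%N by apply: leq_trunc_div.
have d2 : (n - 1 < q.+1 * (12 * m))%N by apply: ltn_ceil; lia.
set k := q.+1.
case: (classic (exists v, v \in S /\ (INR #|Preach E v T| >= INR n / 12)%R)) => [h|hno].
  by left.
right.
have hP : forall v, v \in S -> (#|Preach E v T| <= (n - 1) %/ 12)%N.
  move=> v vS.
  have hv : (INR #|Preach E v T| < INR n / 12)%R.
    apply: Rnot_le_lt => hle; apply: hno; exists v; split => //; exact: Rle_ge hle.
  have : (12 * #|Preach E v T| < n)%N.
    apply/ltP; apply: INR_lt; rewrite -multE mult_INR.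
    have -> : INR 12 = 12%R by rewrite /=; lra.
    lra.
  by rewrite leq_divRL //; lia.
have hSk : (k <= #|S|)%N.
  have h1 : (INR n <= INR #|S| * (6 * L))%R.
    by apply: le_div; [lra | apply: Rge_le].
  have h2 : (INR n <= INR (#|S| * (6 * m.+1)))%R.
    rewrite -!multE !mult_INR (S_INR m).
    have -> : INR 6 = 6%R by rewrite /=; lra.
    have := pos_INR #|S|; nra.
  have := INR_le _ _ h2 => /leP h3.
  rewrite /k; nia.
set s := if q == 0 then 0 else m.+1.
have hks : (k <= expn 2 s)%N.
  rewrite /s /k; case: eqP => [->|_] //.
  apply: leq_trans (ltnW e2'); nia.
have hineq := @arith n m q ((n - 1) %/ 12) s n2 m1 e1 e2' d1 d2 (leq_trunc_div (n - 1) 12) (erefl s).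
have [A [B hAB]] := @comb N E S T n k s ((n - 1) %/ 12) hlt (ltn0Sn q) hSk hks hT hP hineq.
exists A, B, k; split => //.
apply: Rle_ge; apply: div_le; first lra.
have h3 : (n <= k * (12 * m))%N by rewrite /k; lia.
have h4 : (INR n <= INR k * (12 * INR m))%R.
  have := le_INR _ _ (elimT leP h3); rewrite -!multE !mult_INR.
  have -> : INR 12 = 12%R by rewrite /=; lra.
  done.
have := pos_INR k; nra.
Qed.
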